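(* Let $P$ be a program over a propositional signature $\Sigma$ and $q\in\Sigma$. Then for every program $R$ over $\Sigma\setminus\{q\}$, $\{Y\setminus\{q\}: Y\in AS(P\cup R)\}\subseteq AS(f_{SP}(P,q)\cup R)$.
   Context: A program over $\Sigma$ is a finite set of rules $r$ of the form $a_1\vee\dots\vee a_k\leftarrow b_1,\dots,b_l,\ not\,c_1,\dots,not\,c_m,\ not\,not\,d_1,\dots,not\,not\,d_n$ with atoms in $\Sigma$; write $H(r)=\{a_i\}$, $B^+(r)=\{b_i\}$, $B^-(r)=\{c_i\}$, $B^{--}(r)=\{d_i\}$, $B(r)=B^+(r)\cup\{not\,c: c\in B^-(r)\}\cup\{not\,not\,d:d\in B^{--}(r)\}$ (elements of $B(r)$ are literals); a rule is written $H(r)\leftarrow B(r)$. $\Sigma(r)$, $\Sigma(P)$ are the atoms occurring in $r$, $P$. Reduct: $P^I=\{H(r)\leftarrow B^+(r): r\in P, B^-(r)\cap I=\emptyset, B^{--}(r)\subseteq I\}$. $I$ classically satisfies $r$ if $B^+(r)\subseteq I$, $B^-(r)\cap I=\emptyset$, $B^{--}(r)\subseteq I$ imply $H(r)\cap I\ne\emptyset$. An HT-interpretation $\langle X,Y\rangle$ ($X\subseteq Y$) is an HT-model of $P$ if $Y$ classically satisfies all rules of $P$ and $X$ all rules of $P^Y$; $\mathcal{HT}(P)$ is the set of HT-models with $X,Y\subseteq\Sigma(P)$. $Y$ is an answer set of $P$ if $\langle Y,Y\rangle\in\mathcal{HT}(P)$ and no $X\subsetneq Y$ has $\langle X,Y\rangle\in\mathcal{HT}(P)$;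 $AS(P)$ is the set of answer sets. Normal form: $r$ is tautological if $H(r)\cap B^+(r)\ne\emptyset$ or $B^+(r)\cap B^-(r)\ne\emptyset$ or $B^-(r)\cap B^{--}(r)\ne\emptyset$; $r\in P$ is minimal in $P$ if no $r'\in P$ has ($H(r')\subseteq H(r)$ and $B(r')\subsetneq B(r)$) or ($H(r')\subsetneq H(r)$ and $B(r')\subseteq B(r)$). $NF(P)$ is obtained by: 1. removing tautological rules; 2. removing from $B^{--}(r)$ atoms in $B^+(r)$; 3. removing from $H(r)$ atoms in $B^-(r)$; 4. removing rules not minimal in the resulting program. Notation: for a set $S$ of literals, $not\,(S)=\{not\,s:s\in S\}$, $not\,not\,(S)=\{not\,not\,s:s\in S\}$, simplifying $not\,not\,not\,p=not\,p$ and $not\,not\,not\,not\,p=not\,not\,p$. $B^{\setminus q}(r)=B(r)\setminus\{q,not\,q,not\,not\,q\}$, $H^{\setminus q}(r)=H(r)\setminus\{q\}$. For a set of rules $Q$, $D_q(Q)$ is the set of all sets $not\,(\{l_1,\dots,l_m\})\cup not\,not\,(\{l_{m+1},\dots,l_n\})$ where $\langle\{r_1,\dots,r_m\},\{r_{m+1},\dots,r_n\}\rangle$ is a partition of $Q$ (parts possibly empty), $l_i\in B^{\setminus q}(r_i)$ for $i\le m$, $l_j\in H^{\setminus q}(r_j)$ for $j>m$ (so $D_q(\emptyset)=\{\emptyset\}$). The operator $f_{SP}$: let $P'=NF(P)$, $R=\{r\in P': q\notin\Sigma(r)\}$, $R_0=\{r\in P':q\in B(r)\}$, $R_1=\{r\in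 P': not\,q\in B(r)\}$, $R_2=\{r\in P': not\,not\,q\in B(r), q\notin H(r)\}$, $R_3=\{r\in P': not\,not\,q\in B(r), q\in H(r)\}$, $R_4=\{r\in P': not\,not\,q\notin B(r), q\in H(r)\}$. $P''$ consists of: every $r\in R$; and (1a) for $r_0\in R_0$, $r_4\in R_4$: $H(r_0)\cup H^{\setminus q}(r_4)\leftarrow B^{\setminus q}(r_0)\cup B(r_4)$; (2a) for $r_0\in R_0$, $r_3\in R_3$, $r'\in R_1\cup R_4$: $H(r_0)\cup H^{\setminus q}(r_3)\leftarrow B^{\setminus q}(r_0)\cup B^{\setminus q}(r_3)\cup not\,(H^{\setminus q}(r'))\cup not\,not\,(B^{\setminus q}(r'))$; (3a) for $r_0\in R_0$, $r_3\in R_3$, $h\in H(r_0)$, $D\in D_q((R_0\cup R_2)\setminus\{r_0\})$: $H(r_0)\leftarrow B^{\setminus q}(r_0)\cup\{not\,not\,h\}\cup D\cup B^{\setminus q}(r_3)\cup not\,(H^{\setminus q}(r_3))$; (1b) for $r_2\in R_2$, $r_4\in R_4$: $H(r_2)\leftarrow B^{\setminus q}(r_2)\cup not\,(H^{\setminus q}(r_4))\cup not\,not\,(B(r_4))$; (2b) for $r_2\in R_2$, $r_3\in R_3$, $r'\in R_1\cup R_4$: $H(r_2)\leftarrow B^{\setminus q}(r_2)\cup not\,(H^{\setminus q}(r_3)\cup H^{\setminus q}(r'))\cup not\,not\,(B^{\setminus q}(r_3)\cup B^{\setminus q}(r'))$; (3b) for $r_2\in R_2$, $r_3\in R_3$,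 $h\in H(r_2)$, $D\in D_q((R_0\cup R_2)\setminus\{r_2\})$: $H(r_2)\leftarrow B^{\setminus q}(r_2)\cup not\,(H^{\setminus q}(r_3))\cup not\,not\,(B^{\setminus q}(r_3)\cup\{h\})\cup D$; (4) for $r'\in R_1\cup R_4$, $D\in D_q(R_3\cup R_4)$ with $D\cap not\,(B^{\setminus q}(r'))=\emptyset$: $H^{\setminus q}(r')\leftarrow B^{\setminus q}(r')\cup D$; (5) for $r'\in R_1\cup R_4$, $r_3\in R_3$, $r\in R_0\cup R_2$, $D\in D_q(R_4)$ with $D\cap not\,(B^{\setminus q}(r'))=\emptyset$: $H^{\setminus q}(r')\leftarrow B^{\setminus q}(r')\cup not\,(H(r)\cup H^{\setminus q}(r_3))\cup not\,not\,(B^{\setminus q}(r)\cup B^{\setminus q}(r_3))\cup D$; (6) for $r'\in R_1\cup R_4$, $r_3\in R_3$, $h\in H^{\setminus q}(r')$, $D\in D_q((R_1\cup R_4)\setminus\{r'\})$: $H^{\setminus q}(r')\leftarrow B^{\setminus q}(r')\cup not\,(H^{\setminus q}(r_3))\cup not\,not\,(B^{\setminus q}(r_3)\cup\{h\})\cup D$; (7) for $r_0\in R_0$, $r_3,r_3'\in R_3$ with $r_3\ne r_3'$, $D\in D_q((R_0\cup R_2)\setminus\{r_0\})$, $h\in H(r_0)$: $H(r_0)\cup H^{\setminus q}(r_3)\leftarrow B^{\setminus q}(r_0)\cup B^{\setminus q}(r_3)\cup not\,(H^{\setminus q}(r_3'))\cup not\,not\,(B^{\setminus q}(r_3')\cup\{h\})\cup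 D$. Then $f_{SP}(P,q)=NF(P'')$. *)

(* Defs.v *)
From HB Require Import structures.
From mathcomp Require Import all_boot.

Set Implicit Arguments.
Unset Strict Implicit.
Unset Printing Implicit Defensive.

(* A literal is  b  (Pos b),  not c  (Neg c)  or  not not d  (NN d);
   literals are encoded as A + A + A.
   A rule  H(r) <- B(r)  is a pair (head : set of atoms, body : set of literals). *)

Notation lit A := (A + A + A)%type.
Notation rule A := ({set A} * {set (A + A + A)%type})%type.

Section ASP.
Variable A : finType.

Definition Pos (a : A) : lit A := inl (inl a).
Definition Neg (a : A) : lit A := inl (inr a).
Definition NN  (a : A) : lit A := inr a.

Definition atom_of (l : lit A) : A :=
  match l with inl (inl a) => a | inl (inr a) => a | inr a => a end.

Definition H (r : rule A) : {set A} := r.1.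
Definition B (r : rule A) : {set lit A} := r.2.
Definition Bpos (r : rule A) : {set A} := [set a | Pos a \in B r].
Definition Bneg (r : rule A) : {set A} := [set a | Neg a \in B r].
Definition Bnn  (r : rule A) : {set A} := [set a | NN a \in B r].

Definition sig_rule (r : rule A) : {set A} := H r :|: atom_of @: B r.
Definition sig_prog (P : {set rule A}) : {set A} := \bigcup_(r in P) sig_rule r.

Definition sat (I : {set A}) (r : rule A) : bool :=
  [&& Bpos r \subset I, Bneg r :&: I == set0 & Bnn r \subset I] ==> (H r :&: I != set0).
Definition satP (I : {set A}) (P : {set rule A}) : bool := [forall r in P, sat I r].

Definition reduct (P : {set rule A}) (I : {set A}) : {set rule A} :=
  [set ((H r, Pos @: Bpos r) : rule A) | r in P & (Bneg r :&: I == set0) && (Bnn r \subset I)].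

Definition HTmodel (P : {set rule A}) (X Y : {set A}) : bool :=
  [&& X \subset Y, X \subset sig_prog P, Y \subset sig_prog P,
      satP Y P & satP X (reduct P Y)].

Definition answer_set (P : {set rule A}) (Y : {set A}) : bool :=
  HTmodel P Y Y && ~~ [exists X : {set A}, (X \proper Y) && HTmodel P X Y].

Definition tautological (r : rule A) : bool :=
  [|| H r :&: Bpos r != set0, Bpos r :&: Bneg r != set0 | Bneg r :&: Bnn r != set0].

Definition nf_step23 (r : rule A) : rule A :=
  (H r :\: Bneg r, B r :\: (NN @: Bpos r)).

Definition minimal_in (P : {set rule A}) (r : rule A) : bool :=
  ~~ [exists r' in P,
        ((H r' \subset H r) && (B r' \proper B r)) ||
        ((H r' \proper H r) && (B r' \subset B r))].

Definition NF (P : {set rule A}) : {set rule A} :=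
  let P1 := [set r in P | ~~ tautological r] in
  let P2 := nf_step23 @: P1 in
  [set r in P2 | minimal_in P2 r].

(* not l, simplifying  not not not p = not p *)
Definition notl (l : lit A) : lit A :=
  match l with inl (inl a) => Neg a | inl (inr a) => NN a | inr a => Neg a end.
(* not not l, simplifying  not not not p = not p, not not not not p = not not p *)
Definition nnl (l : lit A) : lit A :=
  match l with inl (inl a) => NN a | inl (inr a) => Neg a | inr a => NN a end.

Definition notS (S : {set lit A}) : {set lit A} := notl @: S.
Definition nnS (S : {set lit A}) : {set lit A} := nnl @: S.
Definition notA (S : {set A}) : {set lit A} := Neg @: S.
Definition nnA (S : {set A}) : {set lit A} := NN @: S.

Variable q : A.

Definition Bq (r : rule A) : {set lit A} := [set l in B r | atom_of l != q].
Definition Hq (r : rule A) : {set A} := H r :\ q.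

(* D_q(Q): for each rule r of Q one chooses either  not l  with l in B^{\q}(r)
   (r in the first part of the partition) or  not not h  with h in H^{\q}(r)
   (r in the second part); D is the set of chosen literals. *)
Definition Dq (Q : {set rule A}) : {set {set lit A}} :=
  [set D | [exists f : {ffun rule A -> lit A},
             [forall r in Q, (f r \in notS (Bq r)) || (f r \in nnA (Hq r))]
             && (D == f @: Q)]].

Section fSP.
Variable P : {set rule A}.
Let P' := NF P.
Let R  := [set r in P' | q \notin sig_rule r].
Let R0 := [set r in P' | Pos q \in B r].
Let R1 := [set r in P' | Neg q \in B r].
Let R2 := [set r in P' | (NN q \in B r) && (q \notin H r)].
Let R3 := [set r in P' | (NN q \in B r) && (q \in H r)].
Let R4 := [set r in P' | (NN q \notin B r) && (q \in H r)].
Let R14 := R1 :|: R4.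
Let R02 := R0 :|: R2.

Definition Ppp_mem (x : rule A) : bool :=
  [|| x \in R,
  [exists r0 in R0, exists r4 in R4,
     x == (H r0 :|: Hq r4, Bq r0 :|: B r4)],
  [exists r0 in R0, exists r3 in R3, exists r' in R14,
     x == (H r0 :|: Hq r3, Bq r0 :|: Bq r3 :|: notA (Hq r') :|: nnS (Bq r'))],
  [exists r0 in R0, exists r3 in R3, exists h in H r0, exists D in Dq (R02 :\ r0),
     x == (H r0, Bq r0 :|: [set NN h] :|: D :|: Bq r3 :|: notA (Hq r3))],
  [exists r2 in R2, exists r4 in R4,
     x == (H r2, Bq r2 :|: notA (Hq r4) :|: nnS (B r4))],
  [exists r2 in R2, exists r3 in R3, exists r' in R14,
     x == (H r2, Bq r2 :|: notA (Hq r3 :|: Hq r') :|: nnS (Bq r3 :|: Bq r'))],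
  [exists r2 in R2, exists r3 in R3, exists h in H r2, exists D in Dq (R02 :\ r2),
     x == (H r2, Bq r2 :|: notA (Hq r3) :|: nnS (Bq r3 :|: [set Pos h]) :|: D)],
  [exists r' in R14, exists D in Dq (R3 :|: R4),
     (D :&: notS (Bq r') == set0) && (x == (Hq r', Bq r' :|: D))],
  [exists r' in R14, exists r3 in R3, exists r in R02, exists D in Dq R4,
     (D :&: notS (Bq r') == set0) &&
     (x == (Hq r', Bq r' :|: notA (H r :|: Hq r3) :|: nnS (Bq r :|: Bq r3) :|: D))],
  [exists r' in R14, exists r3 in R3, exists h in Hq r', exists D in Dq (R14 :\ r'),
     x == (Hq r', Bq r' :|: notA (Hq r3) :|: nnS (Bq r3 :|: [set Pos h]) :|: D)]
  |
  [exists r0 in R0, exists r3 in R3, exists r3' in R3, exists D in Dq (R02 :\ r0),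
   exists h in H r0,
     (r3 != r3') &&
     (x == (H r0 :|: Hq r3,
            Bq r0 :|: Bq r3 :|: notA (Hq r3') :|: nnS (Bq r3' :|: [set Pos h]) :|: D))]].

Definition Ppp : {set rule A} := [set x | Ppp_mem x].
End fSP.

Definition fSP (P : {set rule A}) : {set rule A} := NF (Ppp P).

End ASP.

(* f_SP(P,q) with the paper's argument order *)
Definition f_SP (A : finType) (P : {set rule A}) (q : A) : {set rule A} := fSP q P.

(* Main.v *)
Require Import Defs.
From HB Require Import structures.
From mathcomp Require Import all_boot.
Set Implicit Arguments.
Unset Strict Implicit.
Unset Printing Implicit Defensive.

Section Basic.
Variable A : finType.
Implicit Types (I X Y Z : {set A}) (r : rule A) (l : lit A) (S : {set lit A}).

Definition lt I l : bool :=
  match l with inl (inl a) => a \in I | inl (inr a) => a \notin I | inr a => a \in I end.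
Definition isPos l : bool := if l is inl (inl _) then true else false.
Definition allt I S := forall l, l \in S -> lt I l.

Lemma allt_U I S1 S2 : allt I (S1 :|: S2) <-> allt I S1 /\ allt I S2.
Proof.
split.
- by move=> h; split=> l lS; apply: h; rewrite inE lS ?orbT.
- by case=> h1 h2 l; rewrite inE => /orP[] ?; [apply: h1|apply: h2].
Qed.

Lemma lt_notl I l : lt I (notl l) = ~~ lt I l.
Proof. by case: l => [[a|a]|a] //=; rewrite negbK. Qed.
Lemma lt_nnl I l : lt I (nnl l) = lt I l.
Proof. by case: l => [[a|a]|a]. Qed.

Lemma body_allt I r :
  [&& Bpos r \subset I, Bneg r :&: I == set0 & Bnn r \subset I] <-> allt I (B r).
Proof.
split.
- case/and3P=> p n nn; case=> [[a|a]|a] lB /=.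
  + by apply: (subsetP p); rewrite inE.
  + apply/negP=> aI; move/eqP/setP: n => /(_ a); rewrite !inE aI andbT.
    by rewrite /Neg lB.
  + by apply: (subsetP nn); rewrite inE.
- move=> h; apply/and3P; split.
  + by apply/subsetP=> a; rewrite inE => /h.
  + apply/eqP/setP=> a; rewrite !inE; apply/negP=> /andP[aB aI].
    by move: (h _ aB) => /=; rewrite aI.
  + by apply/subsetP=> a; rewrite inE => /h.
Qed.

Lemma satE I r : sat I r <-> (allt I (B r) -> exists2 h, h \in H r & h \in I).
Proof.
rewrite /sat; split.
- move=> /implyP s /body_allt /s /set0Pn [h]; rewrite inE => /andP[]; by exists h.
- move=> s; apply/implyP => /body_allt /s [h h1 h2]; apply/set0Pn; exists h.
  by rewrite inE h1.
Qed.

Lemma satPE I P : satP I P <-> forall r, r \in P -> sat I r.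
Proof.
split; first by move=> /forallP h r rP; move: (h r); rewrite rP.
by move=> h; apply/forallP=> r; apply/implyP=> /h.
Qed.

Definition viol X Y r : bool :=
  [&& Bpos r \subset X, Bneg r :&: Y == set0, Bnn r \subset Y & H r :&: X == set0].

Lemma Bpos_red r : Bpos ((H r, @Pos A @: Bpos r) : rule A) = Bpos r.
Proof.
apply/setP=> a; rewrite !inE /B /=; apply/imsetP/idP.
- by case=> b; rewrite inE => bB [->].
- by move=> aB; exists a; rewrite ?inE.
Qed.
Lemma Bneg_red r : Bneg ((H r, @Pos A @: Bpos r) : rule A) = set0.
Proof. by apply/setP=> a; rewrite !inE /B /=; apply/imsetP; case=> b _. Qed.
Lemma Bnn_red r : Bnn ((H r, @Pos A @: Bpos r) : rule A) = set0.
Proof. by apply/setP=> a; rewrite !inE /B /=; apply/imsetP; case=> b _. Qed.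

Lemma satP_reduct X Y P :
  satP X (reduct P Y) <-> forall r, r \in P -> ~~ viol X Y r.
Proof.
split.
- move=> /satPE h r rP; apply/negP=> /and4P[p n nn hx].
  have : sat X ((H r, @Pos A @: Bpos r)).
    by apply: h; apply/imsetP; exists r => //; rewrite inE rP n nn.
  by rewrite /sat Bpos_red Bneg_red Bnn_red set0I eqxx sub0set p /= /H /= hx.
- move=> h; apply/satPE=> r' /imsetP [r]; rewrite inE => /andP[rP /andP[n nn]] ->.
  rewrite /sat Bpos_red Bneg_red Bnn_red set0I eqxx sub0set.
  apply/implyP=> /andP[p _]; move: (h r rP); rewrite /viol p n nn /=.
  done.
Qed.

Lemma viol_sub X Y r : X \subset Y -> viol X Y r ->
  [/\ allt Y (B r), Bpos r \subset X & H r :&: X = set0].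
Proof.
move=> XY /and4P[p n nn hx]; split => //; last by apply/eqP.
by apply/body_allt; rewrite n nn (subset_trans p XY).
Qed.

Definition good X Y l := lt Y l && (if l is inl (inl a) then a \in X else true).

Lemma viol_good X Y r : (forall l, l \in B r -> good X Y l) ->
   (forall h, h \in H r -> h \notin X) -> viol X Y r.
Proof.
move=> g hh; apply/and4P; split.
- by apply/subsetP=> a; rewrite inE => /g /andP[].
- apply/eqP/setP=> a; rewrite !inE; apply/negP=> /andP[/g /andP[/= aY _] aY'].
  by rewrite aY' in aY.
- by apply/subsetP=> a; rewrite inE => /g /andP[].
- apply/eqP/setP=> a; rewrite !inE; apply/negP=> /andP[/hh /negP ? ?]; done.
Qed.

Lemma viol_sat X Y r : X \subset Y -> viol X Y r -> sat Y r ->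
  exists2 h, h \in H r & (h \in Y) && (h \notin X).
Proof.
move=> XY v /satE s; case: (viol_sub XY v) => al _ hx.
case: (s al) => h h1 h2; exists h => //; rewrite h2 /=.
apply/negP=> hX; move/setP: hx => /(_ h); by rewrite !inE h1 hX.
Qed.

End Basic.

Section NFsec.
Variable A : finType.
Implicit Types (I X Y Z : {set A}) (r : rule A) (l : lit A) (S : {set lit A}) (P : {set rule A}).

Lemma I0 (T : finType) (S1 S2 : {set T}) a : S1 :&: S2 == set0 -> a \in S1 -> a \in S2 -> False.
Proof. by move=> /eqP/setP/(_ a); rewrite !inE => h h1 h2; rewrite h1 h2 in h. Qed.

Lemma NN_imset_Pos a (S : {set A}) : (Pos a \in @NN A @: S) = false.
Proof. by apply/imsetP; case. Qed.
Lemma NN_imset_Neg a (S : {set A}) : (Neg a \in @NN A @: S) = false.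
Proof. by apply/imsetP; case. Qed.
Lemma NN_imset_NN a (S : {set A}) : (NN a \in @NN A @: S) = (a \in S).
Proof. apply/imsetP/idP; [by case=> b bS [->]| by move=> aS; exists a]. Qed.

Lemma NF_mem P r : r \in NF P ->
  exists2 r0, r0 \in P & (~~ tautological r0) /\ r = nf_step23 r0.
Proof.
rewrite /NF inE => /andP[/imsetP[r0]]; rewrite inE => /andP[r0P nt] -> _.
by exists r0.
Qed.

Lemma ntaut r : ~~ tautological r ->
  [/\ H r :&: Bpos r == set0, Bpos r :&: Bneg r == set0 & Bneg r :&: Bnn r == set0].
Proof. by rewrite /tautological !negb_or !negbK => /and3P[]. Qed.

Lemma nf_props P r : r \in NF P -> forall a,
  [/\ a \in H r -> Pos a \notin B r, a \in H r -> Neg a \notin B r,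
      Pos a \in B r -> Neg a \notin B r, NN a \in B r -> Neg a \notin B r
    & Pos a \in B r -> NN a \notin B r].
Proof.
case/NF_mem=> r0 _ [/ntaut [t1 t2 t3] ->] a.
rewrite /nf_step23 /H /B /= !inE NN_imset_Pos NN_imset_Neg NN_imset_NN /=.
split.
- move=> /andP[_ aH]; apply/negP=> aB; apply: (I0 t1 aH); by rewrite inE.
- by move=> /andP[na _]; apply/negP=> aB; rewrite aB in na.
- move=> aP; apply/negP=> aN; apply: (@I0 _ _ _ a t2); by rewrite inE.
- move=> /andP[_ aP]; apply/negP=> aN; apply: (@I0 _ _ _ a t3); by rewrite inE.
- by move=> aP; rewrite /Bpos inE aP.
Qed.

Lemma L_NF1 Y P : satP Y P -> satP Y (NF P).
Proof.
move=> /satPE h; apply/satPE=> r /NF_mem [r0 r0P [_ ->]].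
move: (h r0 r0P) => /satE s; apply/satE => al.
have al0 : allt Y (B r0).
  move=> l lB; case: (boolP (l \in @NN A @: Bpos r0)) => lN; last first.
    by apply: al; rewrite /nf_step23 /B /= inE lN.
  case/imsetP: lN => a; rewrite inE => aP ->.
  have := al (Pos a); rewrite /nf_step23 /B /= inE NN_imset_Pos; apply.
  exact: aP.
case: (s al0) => h0 hH hY; exists h0 => //.
rewrite /nf_step23 /H /= inE hH andbT; apply/negP; rewrite inE => hN.
have := al (Neg h0); rewrite /nf_step23 /B /= inE NN_imset_Neg /= hN => /(_ isT).
by rewrite /= hY.
Qed.

Lemma viol_mono X Y r r' : H r' \subset H r -> B r' \subset B r ->
  viol X Y r -> viol X Y r'.
Proof.
move=> hs bs /and4P[p n nn hx]; apply/and4P; split.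
- apply: subset_trans p; apply/subsetP=> a; rewrite !inE; exact: (subsetP bs).
- apply/eqP/setP=> a; rewrite !inE; apply/negP=> /andP[aB aY]; apply: (I0 n _ aY).
  by rewrite inE; apply: (subsetP bs).
- apply: subset_trans nn; apply/subsetP=> a; rewrite !inE; exact: (subsetP bs).
- apply/eqP/setP=> a; rewrite !inE; apply/negP=> /andP[aH aX]; apply: (I0 hx _ aX).
  exact: (subsetP hs).
Qed.

Lemma L_NF2 X Y P r : X \subset Y -> r \in P -> viol X Y r ->
  exists2 r', r' \in NF P & viol X Y r'.
Proof.
move=> XY rP v; case: (viol_sub XY v) => al p hx.
have nt : ~~ tautological r.
  rewrite /tautological !negb_or !negbK; apply/and3P; split; apply/eqP/setP=> a;
    rewrite !inE; apply/negP.
  - move=> /andP[aH aP]; move/setP: hx => /(_ a); rewrite !inE aH /=.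
    by rewrite (subsetP p a) ?inE.
  - move=> /andP[] /al /= aY /al /= aY'; by rewrite aY in aY'.
  - move=> /andP[] /al /= aY /al /= aY'; by rewrite aY' in aY.
set P2 := @nf_step23 A @: [set r in P | ~~ tautological r].
have sP2 : nf_step23 r \in P2 by apply/imsetP; exists r => //; rewrite inE rP.
have sv : viol X Y (nf_step23 r) by apply: viol_mono v; apply: subsetDl.
pose m (x : rule A) := #|H x| + #|B x|.
have Ps : (fun x => (x \in P2) && viol X Y x) (nf_step23 r) by rewrite /= sP2.
case: (@arg_minnP _ (nf_step23 r) (fun x => (x \in P2) && viol X Y x) m Ps) => x /andP[xP2 xv] xmin.
exists x => //.
rewrite /NF inE -/P2 xP2 /=; apply/negP=> /existsP [y /andP[yP2 yd]].
have [hs bs lt] : [/\ H y \subset H x, B y \subset B x & m y < m x].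
  case/orP: yd => /andP[a b].
  - split => //; first exact: proper_sub.
    by rewrite /m -addnS leq_add // ?subset_leq_card // proper_card.
  - split => //; first exact: proper_sub.
    by rewrite /m -addSn leq_add // ?subset_leq_card // proper_card.
have := xmin y; rewrite yP2 (viol_mono hs bs xv) => /(_ isT).
by rewrite leqNgt lt.
Qed.

End NFsec.

Section Qsec.
Variables (A : finType) (q : A) (P Rx : {set rule A}) (Y : {set A}).
Implicit Types (I X Z : {set A}) (r : rule A) (l : lit A) (S : {set lit A}).

Local Notation Y' := (Y :\ q).
Local Notation P' := (NF P).
Local Notation R0 := [set r in NF P | Pos q \in B r].
Local Notation R1 := [set r in NF P | Neg q \in B r].
Local Notation R2 := [set r in NF P | (NN q \in B r) && (q \notin H r)].
Local Notation R3 := [set r in NF P | (NN q \in B r) && (q \in H r)].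
Local Notation R4 := [set r in NF P | (NN q \notin B r) && (q \in H r)].

Hypothesis HY : forall r, r \in NF P -> sat Y r.
Hypothesis HYR : forall r, r \in Rx -> sat Y r.
Hypothesis Hmin : forall Z, Z \proper Y -> exists2 r, (r \in NF P) || (r \in Rx) & viol Z Y r.
Hypothesis HRq : forall r, r \in Rx -> q \notin sig_rule r.

Lemma ltD I l : atom_of l != q -> lt (I :\ q) l = lt I l.
Proof. by case: l => [[a|a]|a] /= aq; rewrite !inE aq. Qed.

Lemma BqE r l : (l \in Bq q r) = (l \in B r) && (atom_of l != q).
Proof. by rewrite inE. Qed.
Lemma HqE r a : (a \in Hq q r) = (a != q) && (a \in H r).
Proof. by rewrite !inE. Qed.

Lemma allt_Bq I r : allt I (B r) -> allt I (Bq q r).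
Proof. by move=> h l; rewrite BqE => /andP[/h]. Qed.
Lemma allt_BqD I r : allt (I :\ q) (Bq q r) <-> allt I (Bq q r).
Proof.
by split=> h l lB; move: (h l lB); rewrite ltD //; move: lB; rewrite BqE => /andP[].
Qed.
Lemma allt_notA I (S0 : {set A}) : allt I (notA S0) <-> forall a, a \in S0 -> a \notin I.
Proof.
split.
- by move=> h a aS; apply: (h (Neg a)); apply/imsetP; exists a.
- by move=> h l /imsetP[a aS ->]; apply: h.
Qed.
Lemma allt_nnS I S : allt I (nnS S) <-> allt I S.
Proof.
split.
- by move=> h l lS; rewrite -lt_nnl; apply: h; apply/imsetP; exists l.
- by move=> h l /imsetP[l' lS ->]; rewrite lt_nnl; apply: h.
Qed.
Lemma allt_1 I l : allt I [set l] <-> lt I l.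
Proof. by split; [apply; rewrite inE | move=> h l'; rewrite inE => /eqP ->]. Qed.

Lemma qfree r : q \notin sig_rule r ->
  (forall l, l \in B r -> atom_of l != q) /\ (forall a, a \in H r -> a != q).
Proof.
rewrite /sig_rule inE negb_or => /andP[qH qB]; split.
- move=> l lB; apply/negP=> /eqP e; move/negP: qB; apply; apply/imsetP; by exists l.
- by move=> a aH; apply/negP=> /eqP e; move: qH; rewrite -e aH.
Qed.

Lemma qfree_sat r : q \notin sig_rule r -> sat Y r -> sat Y' r.
Proof.
case/qfree=> hb hh /satE s; apply/satE=> al.
have al' : allt Y (B r) by move=> l lB; rewrite -(ltD Y (hb l lB)); apply: al.
case: (s al') => h hH hY; exists h => //; by rewrite !inE hY (hh h hH).
Qed.

Lemma violE Z Y0 r : viol Z Y0 r <->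
  [/\ forall a, Pos a \in B r -> a \in Z, forall a, Neg a \in B r -> a \notin Y0,
      forall a, NN a \in B r -> a \in Y0 & forall a, a \in H r -> a \notin Z].
Proof.
split.
- case/and4P=> p n nn hx; split.
  + by move=> a aB; apply: (subsetP p); rewrite inE.
  + by move=> a aB; apply/negP=> aY; apply: (I0 n _ aY); rewrite inE.
  + by move=> a aB; apply: (subsetP nn); rewrite inE.
  + by move=> a aH; apply/negP=> aZ; apply: (I0 hx aH aZ).
- case=> p n nn hx; apply/and4P; split.
  + by apply/subsetP=> a; rewrite inE => /p.
  + by apply/eqP/setP=> a; rewrite !inE; apply/negP=> /andP[/n/negP].
  + by apply/subsetP=> a; rewrite inE => /nn.
  + by apply/eqP/setP=> a; rewrite !inE; apply/negP=> /andP[/hx/negP].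
Qed.

Lemma qfree_viol Z r : q \notin sig_rule r -> viol (Z :\ q) Y' r -> viol Z Y r.
Proof.
case/qfree=> hb hh /violE [p n nn hx]; apply/violE; split.
- by move=> a aB; move: (p a aB); rewrite inE => /andP[].
- by move=> a aB; move: (n a aB) (hb _ aB); rewrite !inE /= => h aq; rewrite aq in h.
- by move=> a aB; move: (nn a aB); rewrite inE => /andP[].
- by move=> a aH; move: (hx a aH); rewrite !inE (hh _ aH).
Qed.

Lemma memR (p : pred (rule A)) r : (r \in [set r0 in NF P | p r0]) = (r \in NF P) && p r.
Proof. by rewrite in_set. Qed.

Lemma qlit l : atom_of l = q -> [\/ l = Pos q, l = Neg q | l = NN q].
Proof. by case: l => [[a|a]|a] /= ->; [constructor 1|constructor 2|constructor 3]. Qed.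

Lemma L14 r : q \notin Y -> r \in R1 :|: R4 -> allt Y' (Bq q r) ->
  exists2 h, h \in Hq q r & h \in Y'.
Proof.
move=> qY rR /allt_BqD al.
have rP : r \in NF P by move: rR; rewrite in_setU !memR => /orP[/andP[]|/andP[]].
have alB : allt Y (B r).
  move=> l lB; case: (eqVneq (atom_of l) q) => aq; last first.
    by apply: al; rewrite BqE lB aq.
  case: (nf_props rP q) => n1 n2 n3 n4 n5.
  move: rR lB; rewrite in_setU !memR.
  case/qlit: aq => -> //.
  - by case/orP=> [/andP[_ h]|/andP[_ /andP[_ h]]] lB;
       [move: (n3 lB); rewrite h | move: (n1 h); rewrite lB].
  - by case/orP=> [/andP[_ h]|/andP[_ /andP[h _]]] lB;
       [move: (n4 lB); rewrite h | rewrite lB in h].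
case: (satE Y r) => sE _; case: (sE (HY rP) alB) => h hH hY; exists h.
- by rewrite HqE hH andbT; apply/negP=> /eqP e; move: qY; rewrite -e hY.
- rewrite !inE hY andbT; apply/negP=> /eqP e; move: qY; rewrite -e hY //.
Qed.

Lemma L02 r : q \in Y -> r \in R0 :|: R2 -> allt Y' (Bq q r) ->
  exists2 h, h \in H r & h \in Y'.
Proof.
move=> qY rR /allt_BqD al.
have rP : r \in NF P by move: rR; rewrite in_setU !memR => /orP[/andP[]|/andP[]].
case: (nf_props rP q) => n1 n2 n3 n4 n5.
have alB : allt Y (B r).
  move=> l lB; case: (eqVneq (atom_of l) q) => aq; last first.
    by apply: al; rewrite BqE lB aq.
  move: rR lB; rewrite in_setU !memR; case/qlit: aq => -> // rR lB.
  by case/orP: rR => [/andP[_ h]|/andP[_ /andP[h _]]];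
     [move: (n3 h); rewrite lB | move: (n4 h); rewrite lB].
case: (satE Y r) => sE _; case: (sE (HY rP) alB) => h hH hY; exists h => //.
rewrite !inE hY andbT; apply/negP=> /eqP e; move: rR hH; rewrite e in_setU !memR.
case/orP=> [/andP[_ h1]|/andP[_ /andP[_ h1]]] h2; [by move: (n1 h2); rewrite h1|].
by rewrite h2 in h1.
Qed.

Lemma Supp : q \in Y -> exists t, [/\ t \in R3 :|: R4, allt Y (B t),
   allt Y' (Bq q t) & forall h, h \in Hq q t -> h \notin Y'].
Proof.
move=> qY; have pr : Y' \proper Y by rewrite properD1.
case: (Hmin pr) => r rPR v.
have sY : sat Y r by case/orP: rPR => [/HY|/HYR].
have YY : Y' \subset Y by apply: subD1set.
case: (viol_sat YY v sY) => h hH /andP[hY hY'].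
have hq : h = q by apply/eqP; move: hY'; rewrite !inE hY andbT negbK.
have rP : r \in NF P.
  case/orP: rPR => // /HRq; rewrite /sig_rule inE -hq hH //.
case: (viol_sub YY v) => al _ hx.
exists r; split => //.
- by rewrite in_setU !memR rP -hq hH /= !andbT; case: (NN h \in B r).
- by apply/allt_BqD; apply: allt_Bq.
- move=> a aH; apply/negP=> aY; move/setP: hx => /(_ a).
  by move: aH aY; rewrite HqE !inE => /andP[-> ->] /andP[_ ->].
Qed.

Lemma Dq_false I (Q : {set rule A}) t D : t \in Q -> allt I (Bq q t) -> (forall h, h \in Hq q t -> h \notin I) ->
  D \in Dq q Q -> exists2 l, l \in D & ~~ lt I l.
Proof.
move=> tQ al nh; rewrite inE => /existsP [f /andP[/forallP fQ /eqP ->]].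
exists (f t); first by apply/imsetP; exists t.
move: (fQ t); rewrite tQ /= => /orP[/imsetP[l lB ->]|/imsetP[a aH ->]].
- by rewrite lt_notl negbK; apply: al.
- by apply: nh.
Qed.

Lemma Dq_nonpos (Q : {set rule A}) D l : D \in Dq q Q -> l \in D -> ~~ isPos l.
Proof.
rewrite inE => /existsP [f /andP[/forallP fQ /eqP ->]] /imsetP [r rQ ->].
move: (fQ r); rewrite rQ /= => /orP[/imsetP[l' _ ->]|/imsetP[a _ ->]] //.
by case: l' => [[?|?]|?].
Qed.

Lemma Dq_true I (Q : {set rule A}) : (forall r, r \in Q ->
   (exists2 l, l \in Bq q r & ~~ lt I l) \/ (exists2 h, h \in Hq q r & h \in I)) ->
  exists2 D, D \in Dq q Q & allt I D.
Proof.
move=> hQ.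
pose g r := if [pick l in Bq q r | ~~ lt I l] is Some l then notl l
            else if [pick h in Hq q r | h \in I] is Some h then NN h else NN q.
pose f := [ffun r => g r].
have gP r : r \in Q -> ((g r \in notS (Bq q r)) || (g r \in nnA (Hq q r))) && lt I (g r).
  move=> rQ; rewrite /g; case: pickP => [l /andP[lB nl]|n1].
    by rewrite lt_notl nl andbT; apply/orP; left; apply/imsetP; exists l.
  case: pickP => [h /andP[hH hI]|n2].
    by rewrite /= hI andbT; apply/orP; right; apply/imsetP; exists h.
  case: (hQ r rQ) => [[l lB nl]|[h hH hI]]; first by move: (n1 l); rewrite lB nl.
  by move: (n2 h); rewrite hH hI.
exists (f @: Q).
- rewrite inE; apply/existsP; exists f; rewrite eqxx andbT; apply/forallP=> r.
  by apply/implyP=> rQ; rewrite ffunE; case/andP: (gP r rQ).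
- by move=> l /imsetP [r rQ ->]; rewrite ffunE; case/andP: (gP r rQ).
Qed.


Lemma qfree_viol2 Z r : q \notin sig_rule r -> viol Z Y r -> viol (Z :\ q) Y' r.
Proof.
case/qfree=> hb hh /violE [p n nn hx]; apply/violE; split.
- by move=> a aB; move: (p a aB) (hb _ aB); rewrite !inE /= => -> ->.
- by move=> a aB; rewrite !inE (negbTE (n a aB)) andbF.
- by move=> a aB; move: (nn a aB) (hb _ aB); rewrite !inE /= => -> ->.
- by move=> a aH; rewrite !inE (negbTE (hx a aH)) andbF.
Qed.

Lemma sigq r : q \in sig_rule r ->
  [\/ q \in H r, Pos q \in B r, Neg q \in B r | NN q \in B r].
Proof.
rewrite /sig_rule inE => /orP[qH|/imsetP[l lB e]]; first by constructor 1.
by case: (qlit (esym e)) => el; rewrite el in lB; [constructor 2|constructor 3|constructor 4].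
Qed.

Lemma alt_or I S : allt I S \/ exists2 l, l \in S & ~~ lt I l.
Proof.
case: (boolP [forall l in S, lt I l]) => [/forallP h|/forallPn [l]].
- by left=> l lS; move: (h l); rewrite lS.
- by rewrite negb_imply => /andP[? ?]; right; exists l.
Qed.

Lemma R4allt r : q \in Y -> r \in R4 -> allt Y (B r) -> allt Y' (B r).
Proof.
move=> qY rR al l lB; case: (eqVneq (atom_of l) q) => aq; last by rewrite ltD //; apply: al.
move: rR; rewrite memR => /andP[rP /andP[nn qH]].
case: (nf_props rP q) => n1 _ _ _ _.
case/qlit: aq lB => -> lB.
- by move: (n1 qH); rewrite lB.
- by move: (al _ lB); rewrite /= qY.
- by rewrite lB in nn.
Qed.

End Qsec.

Section Sound.
Variables (A : finType) (q : A) (P Rx : {set rule A}) (Y : {set A}).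
Local Notation Y' := (Y :\ q).
Hypothesis HY : forall r, r \in NF P -> sat Y r.
Hypothesis HYR : forall r, r \in Rx -> sat Y r.
Hypothesis Hmin : forall Z : {set A}, Z \proper Y -> exists2 r, (r \in NF P) || (r \in Rx) & viol Z Y r.
Hypothesis HRq : forall r, r \in Rx -> q \notin sig_rule r.

Lemma hin (S0 : {set A}) h : h \in S0 -> h \in Y' -> exists2 h', h' \in S0 & h' \in Y'.
Proof. by exists h. Qed.

Lemma soundA x : x \in Ppp q P -> sat Y' x.
Proof.
have L02' := L02 (q:=q) HY; have L14' := L14 (q:=q) HY.
rewrite /Ppp in_set /Ppp_mem.
case/orP=> [xR|/orP[h1a|/orP[h2a|/orP[h3a|/orP[h1b|/orP[h2b|/orP[h3b|/orP[h4|/orP[h5|/orP[h6|h7]]]]]]]]]].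
- by move: xR; rewrite memR => /andP[xP qs]; apply: qfree_sat qs (HY xP).
- case/existsP: h1a => r0 /andP[r0R /existsP[r4 /andP[r4R /eqP ->]]].
  apply/satE; rewrite /B /H /= => /allt_U [al0 al4].
  case: (boolP (q \in Y)) => qY.
  + have [h hH hY] := L02' r0 qY (ltac:(by rewrite in_setU r0R)) al0.
    by exists h => //; rewrite inE hH.
  + have [h hH hY] := L14' r4 qY (ltac:(by rewrite in_setU r4R orbT)) (allt_Bq al4).
    by exists h => //; rewrite inE hH orbT.
- case/existsP: h2a => r0 /andP[r0R /existsP[r3 /andP[r3R /existsP[r' /andP[rR /eqP ->]]]]].
  apply/satE; rewrite /B /H /= => /allt_U [/allt_U [/allt_U [al0 al3] /allt_notA na] /allt_nnS alr].
  case: (boolP (q \in Y)) => qY.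
  + have [h hH hY] := L02' r0 qY (ltac:(by rewrite in_setU r0R)) al0.
    by exists h => //; rewrite inE hH.
  + have [h hH hY] := L14' r' qY rR alr.
    by move: (na h hH); rewrite hY.
- case/existsP: h3a => r0 /andP[r0R /existsP[r3 /andP[r3R /existsP[h /andP[hH /existsP[D /andP[DD /eqP ->]]]]]]].
  apply/satE; rewrite /B /H /= => /allt_U[/allt_U[/allt_U[/allt_U[_ /allt_1 hY] _] _] _].
  by exists h.
- case/existsP: h1b => r2 /andP[r2R /existsP[r4 /andP[r4R /eqP ->]]].
  apply/satE; rewrite /B /H /= => /allt_U [/allt_U [al2 /allt_notA na] /allt_nnS al4].
  case: (boolP (q \in Y)) => qY.
  + have [h hH hY] := L02' r2 qY (ltac:(by rewrite in_setU r2R orbT)) al2.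
    by exists h.
  + have [h hH hY] := L14' r4 qY (ltac:(by rewrite in_setU r4R orbT)) (allt_Bq al4).
    by move: (na h hH); rewrite hY.
- case/existsP: h2b => r2 /andP[r2R /existsP[r3 /andP[r3R /existsP[r' /andP[rR /eqP ->]]]]].
  apply/satE; rewrite /B /H /= => /allt_U [/allt_U [al2 /allt_notA na] /allt_nnS /allt_U [_ alr]].
  case: (boolP (q \in Y)) => qY.
  + have [h hH hY] := L02' r2 qY (ltac:(by rewrite in_setU r2R orbT)) al2.
    by exists h.
  + have [h hH hY] := L14' r' qY rR alr.
    by move: (na h); rewrite inE hH orbT hY => /(_ isT).
- case/existsP: h3b => r2 /andP[r2R /existsP[r3 /andP[r3R /existsP[h /andP[hH /existsP[D /andP[DD /eqP ->]]]]]]].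
  apply/satE; rewrite /B /H /= => /allt_U[/allt_U[_ /allt_nnS /allt_U[_ /allt_1 hY]] _].
  by exists h.
- case/existsP: h4 => r' /andP[rR /existsP[D /andP[DD /andP[_ /eqP ->]]]].
  apply/satE; rewrite /B /H /= => /allt_U [alr alD].
  case: (boolP (q \in Y)) => qY.
  + case: (Supp HY HYR Hmin HRq qY) => t [tR _ alt nh].
    by case: (Dq_false tR alt nh DD) => l /alD ->.
  + exact: L14' r' qY rR alr.
- case/existsP: h5 => r' /andP[rR /existsP[r3 /andP[r3R /existsP[r /andP[r02 /existsP[D /andP[DD /andP[_ /eqP ->]]]]]]]].
  apply/satE; rewrite /B /H /= => /allt_U [/allt_U [/allt_U [alr /allt_notA na] /allt_nnS /allt_U [al0 _]] _].
  case: (boolP (q \in Y)) => qY.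
  + have [h hH hY] := L02' r qY r02 al0.
    by move: (na h); rewrite inE hH hY => /(_ isT).
  + exact: L14' r' qY rR alr.
- case/existsP: h6 => r' /andP[rR /existsP[r3 /andP[r3R /existsP[h /andP[hH /existsP[D /andP[DD /eqP ->]]]]]]].
  apply/satE; rewrite /B /H /= => /allt_U[/allt_U[_ /allt_nnS /allt_U[_ /allt_1 hY]] _].
  by exists h.
- case/existsP: h7 => r0 /andP[r0R /existsP[r3 /andP[r3R /existsP[r3' /andP[r3R' /existsP[D /andP[DD /existsP[h /andP[hH /andP[_ /eqP ->]]]]]]]]]].
  apply/satE; rewrite /B /H /= => /allt_U[/allt_U[_ /allt_nnS /allt_U[_ /allt_1 hY]] _].
  by exists h => //; rewrite inE hH.
Qed.

End Sound.

Section Good.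
Variables (A : finType) (X Y : {set A}).
Implicit Types (r : rule A) (l : lit A) (S : {set lit A}).
Definition goodS S := forall l, l \in S -> good X Y l.

Lemma goodS_U S1 S2 : goodS S1 -> goodS S2 -> goodS (S1 :|: S2).
Proof. by move=> h1 h2 l; rewrite inE => /orP[/h1|/h2]. Qed.

Lemma goodS_np S : (forall l, l \in S -> ~~ isPos l) -> allt Y S -> goodS S.
Proof. by move=> np al l lS; rewrite /good al //; move: (np l lS); case: l {lS} => [[?|?]|?]. Qed.

Lemma np_notA (S0 : {set A}) l : l \in notA S0 -> ~~ isPos l.
Proof. by case/imsetP=> a _ ->. Qed.
Lemma np_nnS S l : l \in nnS S -> ~~ isPos l.
Proof. by case/imsetP=> l' _ ->; case: l' => [[?|?]|?]. Qed.
Lemma np_NN a l : l \in [set NN a] -> ~~ isPos l.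
Proof. by rewrite inE => /eqP ->. Qed.

Lemma goodS_B S : allt Y S -> (forall a, Pos a \in S -> a \in X) -> goodS S.
Proof. by move=> al p l lS; rewrite /good al //; case: l lS => [[a|a]|a] // /p. Qed.

End Good.

Section Compl.
Variables (A : finType) (q : A) (P Rx : {set rule A}) (Y : {set A}).
Implicit Types (I X Z : {set A}) (r : rule A) (l : lit A) (S : {set lit A}).
Local Notation Y' := (Y :\ q).
Local Notation R0 := [set r in NF P | Pos q \in B r].
Local Notation R1 := [set r in NF P | Neg q \in B r].
Local Notation R2 := [set r in NF P | (NN q \in B r) && (q \notin H r)].
Local Notation R3 := [set r in NF P | (NN q \in B r) && (q \in H r)].
Local Notation R4 := [set r in NF P | (NN q \notin B r) && (q \in H r)].
Local Notation R14 := (R1 :|: R4).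
Local Notation R02 := (R0 :|: R2).
Local Notation PP := (Ppp q P).

Lemma memR0 r : r \in NF P -> q \notin sig_rule r -> r \in PP.
Proof. by move=> rP qs; rewrite /Ppp in_set /Ppp_mem memR rP qs. Qed.

Ltac pk w h := apply/existsP; exists w; rewrite h /=.

Lemma mem1a r0 r4 : r0 \in R0 -> r4 \in R4 -> (H r0 :|: Hq q r4, Bq q r0 :|: B r4) \in PP.
Proof.
move=> h1 h2; rewrite /Ppp in_set /Ppp_mem; apply/orP; right; apply/orP; left.
pk r0 h1; pk r4 h2; by rewrite eqxx.
Qed.

Lemma mem2a r0 r3 r' : r0 \in R0 -> r3 \in R3 -> r' \in R14 ->
  (H r0 :|: Hq q r3, Bq q r0 :|: Bq q r3 :|: notA (Hq q r') :|: nnS (Bq q r')) \in PP.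
Proof.
move=> h1 h2 h3; rewrite /Ppp in_set /Ppp_mem; do 2 (apply/orP; right); apply/orP; left.
pk r0 h1; pk r3 h2; pk r' h3; by rewrite eqxx.
Qed.

Lemma mem3a r0 r3 h D : r0 \in R0 -> r3 \in R3 -> h \in H r0 -> D \in Dq q (R02 :\ r0) ->
  (H r0, Bq q r0 :|: [set NN h] :|: D :|: Bq q r3 :|: notA (Hq q r3)) \in PP.
Proof.
move=> h1 h2 h3 h4; rewrite /Ppp in_set /Ppp_mem; do 3 (apply/orP; right); apply/orP; left.
pk r0 h1; pk r3 h2; pk h h3; pk D h4; by rewrite eqxx.
Qed.

Lemma mem1b r2 r4 : r2 \in R2 -> r4 \in R4 ->
  (H r2, Bq q r2 :|: notA (Hq q r4) :|: nnS (B r4)) \in PP.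
Proof.
move=> h1 h2; rewrite /Ppp in_set /Ppp_mem; do 4 (apply/orP; right); apply/orP; left.
pk r2 h1; pk r4 h2; by rewrite eqxx.
Qed.

Lemma mem3b r2 r3 h D : r2 \in R2 -> r3 \in R3 -> h \in H r2 -> D \in Dq q (R02 :\ r2) ->
  (H r2, Bq q r2 :|: notA (Hq q r3) :|: nnS (Bq q r3 :|: [set Pos h]) :|: D) \in PP.
Proof.
move=> h1 h2 h3 h4; rewrite /Ppp in_set /Ppp_mem; do 6 (apply/orP; right); apply/orP; left.
pk r2 h1; pk r3 h2; pk h h3; pk D h4; by rewrite eqxx.
Qed.

Lemma mem4 r' D : r' \in R14 -> D \in Dq q (R3 :|: R4) -> D :&: notS (Bq q r') == set0 ->
  (Hq q r', Bq q r' :|: D) \in PP.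
Proof.
move=> h1 h2 h3; rewrite /Ppp in_set /Ppp_mem; do 7 (apply/orP; right); apply/orP; left.
apply/existsP; exists r'; rewrite h1 /=; apply/existsP; exists D; rewrite h2 /=.
by rewrite h3 eqxx.
Qed.

Lemma mem6 r' r3 h D : r' \in R14 -> r3 \in R3 -> h \in Hq q r' -> D \in Dq q (R14 :\ r') ->
  (Hq q r', Bq q r' :|: notA (Hq q r3) :|: nnS (Bq q r3 :|: [set Pos h]) :|: D) \in PP.
Proof.
move=> h1 h2 h3 h4; rewrite /Ppp in_set /Ppp_mem; do 9 (apply/orP; right); apply/orP; left.
pk r' h1; pk r3 h2; pk h h3; pk D h4; by rewrite eqxx.
Qed.

Lemma mem7 r0 r3 r3' D h : r0 \in R0 -> r3 \in R3 -> r3' \in R3 -> D \in Dq q (R02 :\ r0) ->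
  h \in H r0 -> r3 != r3' ->
  (H r0 :|: Hq q r3,
   Bq q r0 :|: Bq q r3 :|: notA (Hq q r3') :|: nnS (Bq q r3' :|: [set Pos h]) :|: D) \in PP.
Proof.
move=> h1 h2 h3 h4 h5 h6; rewrite /Ppp in_set /Ppp_mem; do 10 (apply/orP; right).
pk r0 h1; pk r3 h2; pk r3' h3; pk D h4; pk h h5; by rewrite h6 eqxx.
Qed.


Hypothesis HY : forall r, r \in NF P -> sat Y r.
Hypothesis HYR : forall r, r \in Rx -> sat Y r.
Hypothesis Hmin : forall Z : {set A}, Z \proper Y -> exists2 r, (r \in NF P) || (r \in Rx) & viol Z Y r.
Hypothesis HRq : forall r, r \in Rx -> q \notin sig_rule r.

Lemma goodBq X r : allt Y' (Bq q r) -> (forall a, Pos a \in B r -> a != q -> a \in X) ->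
  goodS X Y' (Bq q r).
Proof.
move=> al p; apply: goodS_B => // a; rewrite BqE => /andP[aB aq]; exact: p.
Qed.

Lemma goodS_A X (S0 : {set A}) : (forall a, a \in S0 -> a \notin Y') -> goodS X Y' (notA S0).
Proof. by move=> h; apply: goodS_np; [exact: np_notA | apply/allt_notA]. Qed.
Lemma goodS_N X S : allt Y' S -> goodS X Y' (nnS S).
Proof. by move=> h; apply: goodS_np; [exact: np_nnS | apply/allt_nnS]. Qed.
Lemma goodS_D X Q D : D \in Dq q Q -> allt Y' D -> goodS X Y' D.
Proof. by move=> DD h; apply: goodS_np => // l; apply: Dq_nonpos DD. Qed.

Lemma complB X : X \proper Y' -> (forall r, r \in Rx -> ~~ viol X Y' r) ->
  exists2 x, x \in PP & viol X Y' x.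
Proof.
move=> XY hR.
have XY1 : X \subset Y' := proper_sub XY.
have qX : q \notin X by apply/negP => /(subsetP XY1); rewrite !inE eqxx.
have XY2 : X \subset Y := subset_trans XY1 (subD1set Y q).
have XYp : X \proper Y := proper_sub_trans XY (subD1set Y q).
have XE : X :\ q = X.
  by apply/setP => a; rewrite !inE; case: eqVneq => // ->; rewrite (negbTE qX).
have getr Z : Z \proper Y -> Z :\ q = X -> (exists2 x, x \in PP & viol X Y' x) \/
      (exists r, [/\ r \in NF P, q \in sig_rule r & viol Z Y r]).
  move=> ZY ZX; case: (Hmin ZY) => r /orP[rP|rR] v.
  - case: (boolP (q \in sig_rule r)) => qs; first by right; exists r.
    left; exists r; first exact: memR0.
    by rewrite -ZX; apply: qfree_viol2.
  - by move: (hR r rR); rewrite -ZX (qfree_viol2 (HRq rR) v).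
have headU (S1 S2 : {set A}) : (forall a, a \in S1 -> a \notin X) ->
    (forall a, a \in S2 -> a \notin X) -> forall a, a \in S1 :|: S2 -> a \notin X.
  by move=> h1 h2 a; rewrite inE => /orP[/h1|/h2].
have headq r : (forall a, a \in H r -> a \notin X) -> forall a, a \in Hq q r -> a \notin X.
  by move=> h a; rewrite HqE => /andP[_ /h].
have hx2 r Z : H r :&: Z = set0 -> forall a, a \in H r -> a \notin Z.
  move=> hx a aH; apply/negP=> aZ; move/setP: hx => /(_ a); by rewrite !inE aH aZ.
case: (boolP (q \in Y)) => qY; last first.
                  
  case: (getr X XYp XE) => [//|[r [rP qs v]]].
  case: (viol_sub XY2 v) => al p hx.
  have nNN : NN q \notin B r by apply/negP => /al /=; rewrite (negbTE qY).
  have nPos : Pos q \notin B r.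
    by apply/negP => pq; move: qX; rewrite (subsetP p q) // inE.
  have rR14 : r \in R14.
    rewrite in_setU !memR rP nNN /=.
    by case/sigq: qs => [->|/(negP nPos)|->|/(negP nNN)] //; rewrite orbT.
  have alq : allt Y' (Bq q r) by apply/allt_BqD; apply: allt_Bq.
  have [h hH hY'] := L14 (q:=q) HY qY rR14 alq.
  have goodr : goodS X Y' (Bq q r).
    by apply: goodBq => // a aB _; apply: (subsetP p); rewrite inE.
  have headr := headq r (hx2 _ _ hx).
  case: (pickP (fun t => [&& t \in R3, [forall l in Bq q t, lt Y' l] &
                            [forall a in Hq q t, a \notin Y']])) =>
      [t /and3P[tR3 /forallP alt /forallP nht]|nobad].
  - have [D DD alD] : exists2 D, D \in Dq q (R14 :\ r) & allt Y' D.
      apply: Dq_true => r2; rewrite in_setD1 => /andP[_ r2R].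
      case: (alt_or Y' (Bq q r2)) => [a|[l lB nl]]; last by left; exists l.
      by right; exact: (L14 (q:=q) HY qY r2R a).
    exists (Hq q r, Bq q r :|: notA (Hq q t) :|: nnS (Bq q t :|: [set Pos h]) :|: D).
      exact: mem6.
    apply: viol_good; rewrite /B /H /=; last exact: headr.
    apply: goodS_U; last exact: goodS_D DD alD.
    apply: goodS_U; [apply: goodS_U => //|].
      by apply: goodS_A => a aH; move: (nht a); rewrite aH.
    apply: goodS_N; apply/allt_U; split; last by apply/allt_1.
    by move=> l lB; move: (alt l); rewrite lB.
  - have [D DD alD] : exists2 D, D \in Dq q (R3 :|: R4) & allt Y' D.
      apply: Dq_true => r2; rewrite in_setU => /orP[r2R|r2R].
      + move: (nobad r2); rewrite r2R /=.
        case: (alt_or Y' (Bq q r2)) => [a|[l lB nl]]; last by left; exists l.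
        have -> : [forall l in Bq q r2, lt Y' l].
          by apply/forallP=> l; apply/implyP => /a.
        move=> /= /negbT /forallPn [a']; rewrite negb_imply negbK => /andP[? ?].
        by right; exists a'.
      + case: (alt_or Y' (Bq q r2)) => [a|[l lB nl]]; last by left; exists l.
        by right; apply: (L14 (q:=q) HY qY _ a); rewrite in_setU r2R orbT.
    have Dn : D :&: notS (Bq q r) == set0.
      apply/eqP/setP=> l; rewrite !inE; apply/negP => /andP[lD /imsetP[l' l'B el]].
      by move: (alD _ lD); rewrite el lt_notl (alq _ l'B).
    exists (Hq q r, Bq q r :|: D); first exact: mem4.
    apply: viol_good; rewrite /B /H /=; last exact: headr.
    by apply: goodS_U => //; exact: goodS_D DD alD.
             
have L02' := L02 (q:=q) HY.
have DR02 r0 : exists2 D, D \in Dq q (R02 :\ r0) & allt Y' D.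
  apply: Dq_true => r2; rewrite in_setD1 => /andP[_ r2R].
  case: (alt_or Y' (Bq q r2)) => [a|[l lB nl]]; last by left; exists l.
  have [h hH hY] := L02' _ qY r2R a.
  by right; exists h => //; rewrite HqE hH andbT; move: hY; rewrite !inE => /andP[].
have [t [tR alt alt' nht]] := Supp HY HYR Hmin HRq qY.
set Z1 := X :|: [set q].
have Z1Y : Z1 \proper Y.
  apply/properP; split.
    by apply/subsetP=> a; rewrite !inE => /orP[/(subsetP XY2)|/eqP ->].
  case/properP: XY => _ [a aY aX]; exists a; first by move: aY; rewrite !inE => /andP[].
  by rewrite !inE negb_or aX; move: aY; rewrite !inE => /andP[].
have Z1E : Z1 :\ q = X.
  apply/setP => a; rewrite !inE; case: eqVneq => [->|] /=; first by rewrite (negbTE qX).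
  by rewrite orbF.
have Z1sub : Z1 \subset Y by apply: proper_sub.
case: (getr Z1 Z1Y Z1E) => [//|[r [rP qs v]]].
case: (viol_sub Z1sub v) => alr pr hxr.
have qHr : q \notin H r by apply/negP => qH; move: (hx2 _ _ hxr q qH); rewrite !inE eqxx orbT.
have nNegr : Neg q \notin B r by apply/negP => /alr /=; rewrite qY.
have rR02 : r \in R02.
  rewrite in_setU !memR rP qHr /= andbT.
  by case/sigq: qs => [/(negP qHr)|->|/(negP nNegr)|->] //; rewrite orbT.
have goodr : goodS X Y' (Bq q r).
  apply: goodBq; first by apply/allt_BqD; apply: allt_Bq.
  by move=> a aB aq; move: (subsetP pr a); rewrite !inE aB (negbTE aq) orbF; apply.
have headr : forall a, a \in H r -> a \notin X.
  by move=> a aH; move: (hx2 _ _ hxr a aH); rewrite !inE negb_or => /andP[].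
case: (getr X XYp XE) => [//|[s [sP qss vs]]].
case: (viol_sub XY2 vs) => als ps hxs.
have nPoss : Pos q \notin B s.
  by apply/negP => pq; move: qX; rewrite (subsetP ps q) // inE.
have nNegs : Neg q \notin B s by apply/negP => /als /=; rewrite qY.
have goods : goodS X Y' (Bq q s).
  apply: goodBq; first by apply/allt_BqD; apply: allt_Bq.
  by move=> a aB _; apply: (subsetP ps); rewrite inE.
have heads := hx2 _ _ hxs.
                 
have caseR2 r2 : r2 \in R2 -> allt Y (B r2) -> goodS X Y' (Bq q r2) ->
    (forall a, a \in H r2 -> a \notin X) -> exists2 x, x \in PP & viol X Y' x.
  move=> r2R al2 g2 h2.
  have r2R02 : r2 \in R02 by rewrite in_setU r2R orbT.
  have al2' : allt Y' (Bq q r2) by apply/allt_BqD; apply: allt_Bq.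
  case/setUP: tR => tR.
  - have [h hH hY] := L02' _ qY r2R02 al2'.
    have [D DD alD] := DR02 r2.
    exists (H r2, Bq q r2 :|: notA (Hq q t) :|: nnS (Bq q t :|: [set Pos h]) :|: D).
      exact: mem3b.
    apply: viol_good; rewrite /B /H /= => //.
    apply: goodS_U; last exact: goodS_D DD alD.
    apply: goodS_U; first apply: goodS_U => //; first exact: goodS_A.
    by apply: goodS_N; apply/allt_U; split => //; apply/allt_1.
  - exists (H r2, Bq q r2 :|: notA (Hq q t) :|: nnS (B t)); first exact: mem1b.
    apply: viol_good; rewrite /B /H /= => //.
    apply: goodS_U; first apply: goodS_U => //; first exact: goodS_A.
    by apply: goodS_N; exact: (R4allt qY tR alt).
case/setUP: rR02 => rR; last exact: (caseR2 r rR alr goodr headr).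
have sR : s \in R2 \/ s \in R3 :|: R4.
  rewrite in_setU !memR sP /=.
  case: (boolP (NN q \in B s)) => nq /=; case: (boolP (q \in H s)) => qh /=; auto.
  by case/sigq: qss => [/(negP qh)|/(negP nPoss)|/(negP nNegs)|/(negP nq)].
case: sR => [sR|/setUP [sR|sR]]; first exact: (caseR2 s sR als goods heads).
- case/setUP: tR => tR.
  + have r02 : r \in R02 by rewrite in_setU rR.
    have alr' : allt Y' (Bq q r) by apply/allt_BqD; apply: allt_Bq.
    have [h hH hY] := L02' _ qY r02 alr'.
    have [D DD alD] := DR02 r.
    case: (eqVneq s t) => [est|nst].
    * subst t.
      exists (H r, Bq q r :|: [set NN h] :|: D :|: Bq q s :|: notA (Hq q s)).
        exact: mem3a.
      apply: viol_good; rewrite /B /H /= => //.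
      apply: goodS_U; last exact: goodS_A.
      apply: goodS_U => //; apply: goodS_U; last exact: goodS_D DD alD.
      apply: goodS_U => //; apply: goodS_np; first exact: np_NN.
      by apply/allt_1.
    * exists (H r :|: Hq q s,
         Bq q r :|: Bq q s :|: notA (Hq q t) :|: nnS (Bq q t :|: [set Pos h]) :|: D).
        exact: mem7.
      apply: viol_good; rewrite /B /H /=; last exact: headU headr (headq s heads).
      apply: goodS_U; last exact: goodS_D DD alD.
      apply: goodS_U; first apply: goodS_U; first apply: goodS_U => //.
        exact: goodS_A.
      by apply: goodS_N; apply/allt_U; split => //; apply/allt_1.
  + exists (H r :|: Hq q s, Bq q r :|: Bq q s :|: notA (Hq q t) :|: nnS (Bq q t)).
      by apply: mem2a => //; rewrite in_setU tR orbT.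
    apply: viol_good; rewrite /B /H /=; last exact: headU headr (headq s heads).
    apply: goodS_U; first apply: goodS_U; first apply: goodS_U => //.
      exact: goodS_A.
    exact: goodS_N.
- exists (H r :|: Hq q s, Bq q r :|: B s); first exact: mem1a.
  apply: viol_good; rewrite /B /H /=; last exact: headU headr (headq s heads).
  apply: goodS_U => //; apply: goodS_B; first exact: (R4allt qY sR als).
  by move=> a aB; apply: (subsetP ps); rewrite inE.
Qed.

End Compl.

Lemma sig_progP (A : finType) (Q : {set rule A}) x h : x \in Q -> h \in sig_rule x -> h \in sig_prog Q.
Proof. by move=> xQ hs; apply/bigcupP; exists x. Qed.

Lemma viol_ex (A : finType) (Q : {set rule A}) (X Y : {set A}) :
  ~~ satP X (reduct Q Y) -> exists2 r, r \in Q & viol X Y r.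
Proof.
move=> ns; case: (boolP [exists r in Q, viol X Y r]) => [/existsP [r /andP[? ?]]|ne].
  by exists r.
exfalso; move/negP: ns; apply; apply/satP_reduct => r rQ; apply/negP => v.
by move/negP: ne; apply; apply/existsP; exists r; rewrite rQ.
Qed.

Unset Implicit Arguments.
Set Strict Implicit.

Theorem theorem3 (A : finType) (P : {set rule A}) (q : A) :
  forall R : {set rule A}, q \notin sig_prog R ->
  forall Y : {set A}, answer_set (P :|: R) Y ->
    answer_set (f_SP P q :|: R) (Y :\ q).
Proof.
move=> Rx qR Y /andP[/and5P[_ Ysig _ /satPE sY _] nex].
have HYP r : r \in P -> sat Y r by move=> rP; apply: sY; rewrite inE rP.
have HYR r : r \in Rx -> sat Y r by move=> rR; apply: sY; rewrite inE rR orbT.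
have HY r : r \in NF P -> sat Y r by move: r; apply/satPE; apply: L_NF1; apply/satPE.
have HRq r : r \in Rx -> q \notin sig_rule r.
  by move=> rR; apply/negP=> qs; move/negP: qR; apply; apply: sig_progP rR qs.
have Hmin (Z : {set A}) : Z \proper Y -> exists2 r, (r \in NF P) || (r \in Rx) & viol Z Y r.
  move=> ZY; have ZY' := proper_sub ZY.
  have nHT : ~~ HTmodel (P :|: Rx) Z Y.
    by apply/negP=> h; move/negP: nex; apply; apply/existsP; exists Z; rewrite ZY.
  have : ~~ satP Z (reduct (P :|: Rx) Y).
    apply/negP=> s; move/negP: nHT; apply; apply/and5P; split => //.
    - exact: subset_trans ZY' Ysig.
    - by apply/satPE.
  case/viol_ex => r; rewrite inE => /orP[rP|rR] v.
  - by case: (L_NF2 ZY' rP v) => r' r'P v'; exists r' => //; rewrite r'P.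
  - by exists r => //; rewrite rR orbT.
set Y' := Y :\ q.
set F := f_SP P q.
have satF : satP Y' (F :|: Rx).
  apply/satPE=> x; rewrite inE => /orP[xF|xR].
  - move: x xF; apply/satPE; apply: L_NF1; apply/satPE => x.
    exact: (soundA HY HYR Hmin HRq).
  - exact: qfree_sat (HRq x xR) (HYR x xR).
have compl (X : {set A}) : X \proper Y' -> exists2 x, x \in F :|: Rx & viol X Y' x.
  move=> XY; have XY' := proper_sub XY.
  case: (boolP [exists r in Rx, viol X Y' r]) => [/existsP [r /andP[rR v]]|ne].
    by exists r => //; rewrite inE rR orbT.
  have hR r : r \in Rx -> ~~ viol X Y' r.
    by move=> rR; apply/negP=> v; move/negP: ne; apply; apply/existsP; exists r; rewrite rR.
  case: (complB HY HYR Hmin HRq XY hR) => x xP v.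
  case: (L_NF2 XY' xP v) => x' x'F v'; exists x' => //.
  by rewrite inE x'F.
have YsigF : Y' \subset sig_prog (F :|: Rx).
  apply/subsetP=> a aY; apply/negPn/negP => aS.
  set Z := Y' :&: sig_prog (F :|: Rx).
  have ZY : Z \proper Y'.
    apply/properP; split; first exact: subsetIl.
    by exists a => //; rewrite inE (negbTE aS) andbF.
  case: (compl Z ZY) => x xF v.
  have := satF; move/satPE => /(_ x xF) sx.
  case: (viol_sat (proper_sub ZY) v sx) => h hH /andP[hY hZ].
  move/negP: hZ; apply; rewrite inE hY /=; apply: sig_progP xF _.
  by rewrite /sig_rule inE hH.
apply/andP; split.
- apply/and5P; split => //.
  apply/satP_reduct => x xF; apply/negP => v.
  have := satF; move/satPE => /(_ x xF) sx.
  by case: (viol_sat (subxx _) v sx) => h _ /andP[->].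
- apply/negP=> /existsP [X /andP[XY /and5P[_ _ _ _ s]]].
  case: (compl X XY) => x xF v.
  by move/satP_reduct: s => /(_ x xF); rewrite v.
Qed.
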